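(* Let $G$ be a graph with an RDV representation on a rooted tree $T$, and let $v_1$ be a vertex of $G$ that maximizes $y(t(v_1))$ (the distance of $t(v_1)$ from the root) over all vertices. Then $v_1$ is simple in $G$: its closed neighbourhood $N[v_1]$ is a clique, and its elements can be ordered $w_1,\dots,w_k$ so that $N[w_1]\subseteq N[w_2]\subseteq\cdots\subseteq N[w_k]$.
   Context: An RDV representation of a graph $G$ consists of a rooted tree $T$ and, for every vertex $v$ of $G$, a downward path $P(v)$ in $T$ (a path starting at some node and always proceeding from a node to one of its children), such that distinct $v,w$ are adjacent iff $P(v)$ and $P(w)$ share a node. $t(v)$ is the node of $P(v)$ closest to the root, and $y(u)$ denotes the distance of node $u$ from the root. $N[v]$ is the closed neighbourhood of $v$ (the set consisting of $v$ and its neighbours). *)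

(* Defs.v *)
From mathcomp Require Import all_boot.
Set Implicit Arguments. Unset Strict Implicit. Unset Printing Implicit Defensive.

(* A rooted tree on a finite node type N: a root and a parent map with
   par root = root, such that every node reaches the root by iterating par.
   (The edges u -- par u, u <> root, then form a tree rooted at root.) *)
Record rtree (N : finType) := RTree {
  root : N;
  par : N -> N;
  par_root : par root = root;
  reach_root : forall u : N, exists k, iter k par u == root
}.

Definition depth (N : finType) (T : rtree N) (u : N) : nat :=
  ex_minn (reach_root T u).

Definition child (N : finType) (T : rtree N) : rel N :=
  fun a c => (par T c == a) && (c != a).

Definition simple_graph (V : finType) (e : rel V) : Prop :=
  symmetric e /\ irreflexive e.

(* An RDV representation of (V, e) on T: for each vertex v, a downward path
   P(v) = t v :: s v, starting at t v (the node closest to the root) and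
   proceeding from each node to one of its children. *)
Record rdv_rep (V N : finType) (e : rel V) (T : rtree N) := RDV {
  top : V -> N;
  rest : V -> seq N;
  rdv_down : forall v, path (child T) (top v) (rest v);
  rdv_adj : forall v w, v != w ->
     (e v w <-> [set x in top v :: rest v] :&: [set x in top w :: rest w] != set0)
}.

Definition cnbhd (V : finType) (e : rel V) (v : V) : {set V} :=
  [set w | (w == v) || e v w].

Definition simple_vertex (V : finType) (e : rel V) (v : V) : Prop :=
  (forall x y, x \in cnbhd e v -> y \in cnbhd e v -> x != y -> e x y) /\
  exists s : seq V, [/\ uniq s, (forall x, (x \in s) = (x \in cnbhd e v)) &
     sorted (fun a b => cnbhd e a \subset cnbhd e b) s].

(* Main.v *)
Require Import Defs.
From mathcomp Require Import all_boot.
From mathcomp Require Import zify.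
Set Implicit Arguments. Unset Strict Implicit.

Section Aux.
Variables (N : finType) (T : rtree N).

Lemma depth_spec u : iter (depth T u) (par T) u = Defs.root T /\
  forall k, iter k (par T) u = Defs.root T -> depth T u <= k.
Proof.
rewrite /depth; case: ex_minnP => m /eqP Hm Hmin; split => // k Hk.
by apply: Hmin; apply/eqP.
Qed.

Lemma iter_root k : iter k (par T) (Defs.root T) = Defs.root T.
Proof. by elim: k => //= k ->; rewrite par_root. Qed.

Lemma depth0 u : depth T u = 0 -> u = Defs.root T.
Proof. by move=> H; have [H1 _] := depth_spec u; rewrite H in H1. Qed.

Lemma depth_par u : depth T (par T u) = depth T u - 1.
Proof.
have [Hu Hmu] := depth_spec u; have [Hp Hmp] := depth_spec (par T u).
case E: (depth T u) => [|m].
  have := depth0 E => ->; rewrite par_root.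
  have := (depth_spec (Defs.root T)).2 0 erefl; lia.
have h1 : depth T (par T u) <= m.
  apply: Hmp; by rewrite -iterSr -E.
have h2 : m.+1 <= (depth T (par T u)).+1.
  rewrite -E; apply: Hmu; by rewrite iterSr.
lia.
Qed.

Lemma depth_iter k x : depth T (iter k (par T) x) = depth T x - k.
Proof. elim: k => [|k IH] /=; first lia. rewrite depth_par IH; lia. Qed.

Lemma path_char t s : path (child T) t s ->
  t = iter (size s) (par T) (last t s) /\
  forall x, (x \in t :: s) = (x \in traject (par T) (last t s) (size s).+1).
Proof.
elim: s t => [|c s IH] t.
  by move=> _; split => // x; rewrite /= !inE.
rewrite [path _ _ _]/= => /andP [/andP [/eqP Hc _] Hp]; have [H1 H2] := IH c Hp.
have El : last t (c :: s) = last c s by [].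
have Es : size (c :: s) = (size s).+1 by [].
rewrite El Es.
split; first by rewrite iterS -H1 Hc.
move=> x; rewrite [x \in t :: _]in_cons H2 [in RHS]trajectSr mem_rcons.
by rewrite [in RHS]in_cons iterS -H1 Hc.
Qed.

Lemma path_mem t s x : path (child T) t s ->
  (x \in t :: s) <-> exists2 j, j <= size s & x = iter j (par T) (last t s).
Proof.
move=> /path_char [_ H]; rewrite H; split.
  by case/trajectP => j Hj ->; exists j.
by case=> j Hj ->; apply/trajectP; exists j.
Qed.

Lemma path_top t s : path (child T) t s -> t = iter (size s) (par T) (last t s).
Proof. by case/path_char. Qed.

Lemma path_depth t s x : path (child T) t s -> x \in t :: s -> depth T t <= depth T x.
Proof.
move=> Hp /(path_mem _ Hp) [j Hj ->]; rewrite {1}(path_top Hp) !depth_iter; lia.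
Qed.

Lemma path_anc t s x k : path (child T) t s -> x \in t :: s ->
  depth T t <= depth T (iter k (par T) x) -> iter k (par T) x \in t :: s.
Proof.
move=> Hp /(path_mem _ Hp) [j Hj ->]; rewrite -iterD.
set L := last t s; have Ht := path_top Hp; rewrite -/L in Ht.
case: (leqP (k + j) (size s)) => Hkj.
  by move=> _; apply/(path_mem _ Hp); exists (k + j).
have -> : k + j = (k + j - size s) + size s by lia.
rewrite iterD -Ht depth_iter => Hd.
have [E|E] : depth T t = 0 \/ k + j - size s = 0 by lia.
  by rewrite (depth0 E) iter_root -(depth0 E) mem_head.
rewrite E /=; exact: mem_head.
Qed.

End Aux.

Theorem mainTheorem6 (V N : finType) (e : rel V) (T : rtree N)
  (R : rdv_rep e T) (v1 : V) :
  simple_graph e ->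
  (forall v : V, depth T (top R v) <= depth T (top R v1)) ->
  simple_vertex e v1.
Proof.
move=> [esym eirr] Hmax.
pose P v := top R v :: rest R v.
have Hd v := rdv_down R v.
have adj v w x : x \in P v -> x \in P w -> w \in cnbhd e v.
  move=> Hv Hw; rewrite inE; case: eqVneq => //= /eqP Hne.
  have Hne' : v != w by apply/eqP => E; apply: Hne; rewrite E.
  apply/(rdv_adj R Hne'); apply/set0Pn; exists x; rewrite !inE; exact/andP.
have common v w : e v w -> exists x, (x \in P v) && (x \in P w).
  move=> Hvw; have Hne : v != w by apply/eqP => E; rewrite E eirr in Hvw.
  have /set0Pn [x] := (rdv_adj R Hne).1 Hvw; rewrite !inE => Hx; by exists x.
set a := top R v1.
have aP w : w \in cnbhd e v1 -> a \in P w.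
  rewrite inE => /orP [/eqP -> | Hw]; first exact: mem_head.
  have [x /andP [Hx1 Hx2]] := common _ _ Hw.
  have /(path_mem _ (Hd v1)) [j Hj Ex] := Hx1.
  have Ea := path_top (Hd v1).
  have Eya : iter (size (rest R v1) - j) (par T) x = a.
    by rewrite Ex -iterD subnK // -Ea.
  rewrite -Eya; apply: path_anc => //.
  by rewrite Eya Hmax.
split.
  move=> x y Hx Hy Hxy.
  have := adj x y a (aP x Hx) (aP y Hy); rewrite inE => /orP [/eqP E|//].
  by rewrite E eqxx in Hxy.
pose r := fun x y => depth T (top R y) <= depth T (top R x).
exists (sort r (enum (cnbhd e v1))); split.
- by rewrite sort_uniq enum_uniq.
- by move=> x; rewrite mem_sort mem_enum.
apply: (@sub_in_sorted _ (mem (cnbhd e v1)) r).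
  move=> w1 w2 Hw1 Hw2 /= Hr; apply/subsetP => u.
  rewrite [u \in cnbhd e w1]inE => /orP [/eqP -> | Hu].
    exact: adj (aP w2 Hw2) (aP w1 Hw1).
  have [x /andP [Hx1 Hxu]] := common _ _ Hu.
  have Ha1 := aP w1 Hw1; have Ha2 := aP w2 Hw2.
  have /(path_mem _ (Hd w1)) [i Hi Ex] := Hx1.
  have /(path_mem _ (Hd w1)) [j Hj Ea] := Ha1.
  case: (leqP i j) => Hij.
    have Eax : a = iter (j - i) (par T) x by rewrite Ex -iterD subnK.
    have : a \in P u by rewrite Eax; apply: path_anc => //; rewrite -Eax Hmax.
    by move=> Hau; exact: adj Ha2 Hau.
  have Exa : x = iter (i - j) (par T) a by rewrite Ea -iterD subnK // ltnW.
  have : x \in P w2.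
    rewrite Exa; apply: path_anc => //; rewrite -Exa.
    apply: leq_trans Hr _; exact: path_depth (Hd w1) Hx1.
  by move=> Hx2; exact: adj Hx2 Hxu.
- by apply/allP => x; rewrite mem_sort mem_enum.
apply: sort_sorted => x y; rewrite /r; exact: leq_total.
Qed.
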